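(* Let $\mathcal{A}$ be a finite abelian group with $|\mathcal{A}|\ge 3$. For integers $p_1\ge 1$ and $p_2\ge 0$, let $G_2(p_1,p_2)$ be the graph consisting of a triangle $v_2v_3v_4$, a vertex $v_1$ adjacent to $v_2$, $p_1$ pendant vertices adjacent to $v_1$, and $p_2$ pendant vertices adjacent to $v_2$. Then $G_2(p_1,p_2)$ is $\mathcal{A}$-vertex magic if and only if $p_2=0$ and $|\mathcal{A}|$ is even.
   Context: A map $\ell:V(G)\to\mathcal{A}\setminus\{0\}$ is an $\mathcal{A}$-vertex magic labeling if there is $\mu\in\mathcal{A}$ with $\sum_{u\in N(v)}\ell(u)=\mu$ for every vertex $v$; $G$ is $\mathcal{A}$-vertex magic if such a labeling exists. A pendant vertex is a vertex of degree $1$. *)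

(* Defs.v *)
From HB Require Import structures.
From mathcomp Require Import all_boot all_order all_algebra.
Set Implicit Arguments. Unset Strict Implicit. Unset Printing Implicit Defensive.
Import GRing.Theory.
Local Open Scope ring_scope.

(* A (simple) graph is given by a symmetric irreflexive relation on a finite
   vertex type; N(v) = [pred u | adj v u]. *)
Definition is_vertex_magic_labeling (A : zmodType) (V : finType) (adj : rel V)
  (l : V -> A) : Prop :=
  (forall v, l v != 0) /\ exists mu : A, forall v, \sum_(u | adj v u) l u = mu.

Definition vertex_magic (A : zmodType) (V : finType) (adj : rel V) : Prop :=
  exists l : V -> A, is_vertex_magic_labeling adj l.

(* Vertices of G_2(p1,p2): inl i (i : 'I_4) is v_(i+1);
   inr (inl k) is the k-th pendant at v1; inr (inr k) the k-th pendant at v2. *)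
Definition G2V (p1 p2 : nat) : finType := ('I_4 + ('I_p1 + 'I_p2))%type.

Definition G2_edge (p1 p2 : nat) (x y : G2V p1 p2) : bool :=
  match x, y with
  | inl i, inl j =>
      [|| (val i == 0%N) && (val j == 1%N),
          (val i == 1%N) && (val j == 2%N),
          (val i == 2%N) && (val j == 3%N)
        | (val i == 1%N) && (val j == 3%N)]
  | inr (inl _), inl j => val j == 0%N
  | inr (inr _), inl j => val j == 1%N
  | _, _ => false
  end.

Definition G2_adj (p1 p2 : nat) : rel (G2V p1 p2) :=
  fun x y => G2_edge x y || G2_edge y x.

(* Main.v *)
Require Import Defs.
From mathcomp Require Import all_boot all_order all_algebra all_fingroup all_solvable.
Import GRing.Theory FinRing.Theory.
Local Open Scope ring_scope.
Section S.
Variables (A : finZmodType) (p1 p2 : nat) (l : G2V p1 p2 -> A).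
Notation V i := (inl (@Ordinal 4 i isT) : G2V p1 p2).
Notation P k := (inr (inl k) : G2V p1 p2).
Notation Q k := (inr (inr k) : G2V p1 p2).
Lemma sumv (v : G2V p1 p2) : \sum_(u | G2_adj v u) l u =
  \sum_(j < 4) (if G2_adj v (inl j) then l (inl j) else 0) +
  (\sum_(k < p1 | G2_adj v (inr (inl k))) l (inr (inl k)) +
  \sum_(k < p2 | G2_adj v (inr (inr k))) l (inr (inr k))).
Proof. by rewrite big_sumType /= big_sumType /= big_mkcond. Qed.
Lemma s_gen (v : G2V p1 p2) (b1 b2 : bool) :
  (forall k, G2_adj v (P k) = b1) -> (forall k, G2_adj v (Q k) = b2) ->
  \sum_(u | G2_adj v u) l u =
  (if G2_adj v (V 0) then l (V 0) else 0) + (if G2_adj v (V 1) then l (V 1) else 0)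
  + (if G2_adj v (V 2) then l (V 2) else 0) + (if G2_adj v (V 3) then l (V 3) else 0)
  + ((if b1 then \sum_k l (P k) else 0) + (if b2 then \sum_k l (Q k) else 0)).
Proof.
move=> h1 h2; rewrite sumv !big_ord_recl big_ord0 addr0 !addrA.
congr (_ + _ + _ + _ + _ + _).
- by congr (if G2_adj v (inl _) then l (inl _) else 0); apply: val_inj.
- by congr (if G2_adj v (inl _) then l (inl _) else 0); apply: val_inj.
- by congr (if G2_adj v (inl _) then l (inl _) else 0); apply: val_inj.
- by congr (if G2_adj v (inl _) then l (inl _) else 0); apply: val_inj.
- rewrite (eq_bigl (fun _ => b1)) //; case: b1 {h1} => //; exact: big_pred0.
- rewrite (eq_bigl (fun _ => b2)) //; case: b2 {h2} => //; exact: big_pred0.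
Qed.
Lemma eqs (mu : A) (H : forall v, \sum_(u | G2_adj v u) l u = mu) :
  [/\ l (V 1) + l (V 3) = mu, l (V 1) + l (V 2) = mu,
      l (V 0) + l (V 2) + l (V 3) + \sum_k l (Q k) = mu,
      l (V 1) + \sum_k l (P k) = mu &
      (forall k : 'I_p1, l (V 0) = mu) /\ (forall k : 'I_p2, l (V 1) = mu)].
Proof.
split.
- by have := H (V 2); rewrite (@s_gen _ false false) //= !addr0 add0r.
- by have := H (V 3); rewrite (@s_gen _ false false) //= !addr0 add0r.
- by have := H (V 1); rewrite (@s_gen _ false true) //= !addr0 add0r.
- by have := H (V 0); rewrite (@s_gen _ true false) //= !addr0 add0r.
split.
- by move=> k; have := H (P k); rewrite (@s_gen _ false false) //= !addr0.
- by move=> k; have := H (Q k); rewrite (@s_gen _ false false) //= !addr0 add0r.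
Qed.
End S.
Lemma mulrn_ord2 (A : finZmodType) (t : A) n : t + t = 0 -> t *+ n = if odd n then t else 0.
Proof.
move=> h; elim: n => [|n IH]; first by rewrite mulr0n.
rewrite mulrS IH /=; case: (odd n) => /=; [by rewrite h | by rewrite addr0].
Qed.

Lemma ord2_even (A : finZmodType) (x : A) : x != 0 -> x + x = 0 -> ~~ odd #|A|.
Proof.
move=> nx hx.
have o2 : (#[x]%g %| 2)%N by rewrite order_dvdn zmodXgE mulr2n hx.
have oG : (#[x]%g %| #|[set: A]|)%N by apply: order_dvdG; rewrite in_setT.
rewrite cardsT in oG.
have : #[x]%g != 1%N by rewrite order_eq1.
have : (0 < #[x]%g)%N by apply: order_gt0.
move: o2 oG; rewrite dvdn_divisors // => /=.
rewrite (_ : divisors 2 = [:: 1; 2]%N) // !inE.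
case/orP => /eqP -> //.
by move=> /dvdnP[k ->] _ _; rewrite oddM andbF.
Qed.

Lemma even_ord2 (A : finZmodType) : ~~ odd #|A| -> exists t : A, t != 0 /\ t + t = 0.
Proof.
move=> ev.
have h2 : (2 %| #|[set: A]%G|)%N by rewrite cardsT dvdn2.
have [t _ ot] := @Cauchy _ 2 [set: A]%G isT h2.
exists t; split.
  by apply/negP => /eqP t0; move: ot; rewrite t0 -zmod1gE order1.
by have := expg_order t; rewrite ot zmodXgE mulr2n.
Qed.

Lemma pend_labels (A : finZmodType) (t x : A) (p : nat) : (1 <= p)%N ->
  t != 0 -> t + t = 0 -> x != 0 -> x != t ->
  exists f : 'I_p -> A, (forall k, f k != 0) /\ \sum_k f k = t.
Proof.
move=> hp nt ht nx xt.
case Op: (odd p).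
  exists (fun _ => t); split => //.
  by rewrite sumr_const card_ord mulrn_ord2 // Op.
case: p hp Op => [//|[//|n]] _ Op.
exists (fun k : 'I_n.+2 => if val k == 0%N then x else if val k == 1%N then t - x else t).
split.
  move=> k; case: ifP => // _; case: ifP => // _.
  by rewrite subr_eq0 eq_sym.
rewrite !big_ord_recl /=.
rewrite (eq_bigr (fun _ => t)) // sumr_const card_ord mulrn_ord2 //.
have -> : odd n = false by move: Op => /=; case: (odd n).
by rewrite addr0 addrA addrC addKr.
Qed.

Theorem proposition3p2 (A : finZmodType) (p1 p2 : nat) :
  (3 <= #|A|)%N -> (1 <= p1)%N ->
  (@vertex_magic A (G2V p1 p2) (@G2_adj p1 p2) <-> p2 = 0%N /\ ~~ odd #|A|).
Proof.
move=> hA hp1; split.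
  case=> l [nz [mu H]].
  have [e3 e4 e1 e0 [ep eq]] := @eqs _ _ _ _ _ H.
  have e0' := ep (Ordinal hp1).
  have p20 : p2 = 0%N.
    case E: p2 => [//|n].
    have k : 'I_p2 by rewrite E; exact: ord0.
    move: e3; rewrite (eq k) -{2}[mu]addr0 => /addrI h.
    by move: (nz (inl (@Ordinal 4 3 isT))); rewrite h eqxx.
  split => //.
  subst p2.
  move: e1; rewrite big_ord0 addr0 e0' -addrA -{2}[mu]addr0 => /addrI.
  have -> : l (inl (@Ordinal 4 3 isT)) = l (inl (@Ordinal 4 2 isT)).
    by apply: (@addrI _ (l (inl (@Ordinal 4 1 isT)))); rewrite e3 e4.
  by apply: ord2_even.
case=> p20 ev; subst p2.
have [t [nt ht]] := @even_ord2 A ev.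
have : [exists y : A, (y != 0) && (y != t)].
  rewrite -[X in is_true X]negbK; apply/negP => /existsPn hn.
  have : A \subset [set 0; t].
    apply/subsetP => y _; rewrite !inE; move: (hn y).
    by rewrite negb_and !negbK.
  move/subset_leq_card; rewrite cards2.
  move: hA; case: (0 != t) => /=; rewrite leqNgt => /negP; [|move=> h]; last first.
    by move=> h2; apply: h; apply: leq_trans h2 _; rewrite ltnS ltnW.
  by move=> h h2; apply: h; apply: leq_ltn_trans h2 _.
case/existsP => x /andP[nx xt].
have [f [nf sf]] := @pend_labels _ _ _ _ hp1 nt ht nx xt.
exists (fun u : G2V p1 0 => match u with
  | inl i => if val i == 0%N then x else if val i == 1%N then x - t else t
  | inr (inl k) => f k
  | inr (inr _) => x end).
split.
  case=> [i|[k|k]] //; case: ifP => // _; case: ifP => // _.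
  by rewrite subr_eq0.
exists x.
case=> [[[|[|[|[|//]]]] hi]|[k|k]].
- rewrite (_ : Ordinal hi = @Ordinal 4 0 isT); last exact: val_inj.
  rewrite (@s_gen _ _ _ _ _ true false) //= sf.
  by rewrite !(addr0, add0r) ?subrK // -addrA ht addr0.
- rewrite (_ : Ordinal hi = @Ordinal 4 1 isT); last exact: val_inj.
  rewrite (@s_gen _ _ _ _ _ false true) //= big_ord0.
  by rewrite !(addr0, add0r) ?subrK // -addrA ht addr0.
- rewrite (_ : Ordinal hi = @Ordinal 4 2 isT); last exact: val_inj.
  rewrite (@s_gen _ _ _ _ _ false false) //=.
  by rewrite !(addr0, add0r) ?subrK // -addrA ht addr0.
- rewrite (_ : Ordinal hi = @Ordinal 4 3 isT); last exact: val_inj.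
  rewrite (@s_gen _ _ _ _ _ false false) //=.
  by rewrite !(addr0, add0r) ?subrK // -addrA ht addr0.
- rewrite (@s_gen _ _ _ _ _ false false) //=.
  by rewrite !(addr0, add0r) ?subrK // -addrA ht addr0.
- by case: k.
Qed.
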